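(* Let $\mathcal{M}$ be a rigid monoidal category and let $F,G\colon\mathcal{M}\to\mathrm{vect}$ be monoidal functors with $F(\mathbbm{1})=G(\mathbbm{1})=\Bbbk$. Suppose that (i) $F$ is non-degenerate, i.e. for every object $X\in\mathcal{M}$, $F(X)$ is spanned by the vectors $F(f)(1)$ for $f\in\mathcal{M}(\mathbbm{1},X)$; (ii) $\dim_\Bbbk F(X)\geq\dim_\Bbbk G(X)$ for all $X\in\mathcal{M}$; (iii) $F(\varphi)=G(\varphi)$ for all $\varphi\in\operatorname{End}_\mathcal{M}(\mathbbm{1})$. Then there is a unique monoidal natural isomorphism between $F$ and $G$.
   Context: $\mathrm{vect}$ denotes the category of finite-dimensional vector spaces over a field $\Bbbk$; endomorphisms of $\mathbbm{1}$ are sent by $F,G$ to scalars in $\operatorname{End}(\Bbbk)=\Bbbk$. *)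

(* Defs.v *)
From HB Require Import structures.
From mathcomp Require Import all_boot all_order all_algebra.
From mathcomp Require Import mxtens.
Set Implicit Arguments. Unset Strict Implicit. Unset Printing Implicit Defensive.
Import GRing.Theory.
Local Open Scope ring_scope.

(* Composition is written diagrammatically: cmp f g = "first f, then g".
   This matches MathComp's row-vector convention for matrices
   (the map of A is u |-> u *m A, so the composite of A then B is A *m B). *)
Record MonCat := {
  ob :> Type;
  mhom : ob -> ob -> Type;
  idm : forall X, mhom X X;
  cmp : forall X Y Z, mhom X Y -> mhom Y Z -> mhom X Z;
  cmp1f : forall X Y (f : mhom X Y), cmp (idm X) f = f;
  cmpf1 : forall X Y (f : mhom X Y), cmp f (idm Y) = f;
  cmpA : forall X Y Z W (f : mhom X Y) (g : mhom Y Z) (h : mhom Z W),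
      cmp f (cmp g h) = cmp (cmp f g) h;
  tens : ob -> ob -> ob;
  tensh : forall X X' Y Y', mhom X Y -> mhom X' Y' -> mhom (tens X X') (tens Y Y');
  tens_id : forall X Y, tensh (idm X) (idm Y) = idm (tens X Y);
  tens_cmp : forall X X' Y Y' Z Z' (f : mhom X Y) (g : mhom Y Z)
      (f' : mhom X' Y') (g' : mhom Y' Z'),
      tensh (cmp f g) (cmp f' g') = cmp (tensh f f') (tensh g g');
  munit : ob;
  assoc : forall X Y Z, mhom (tens (tens X Y) Z) (tens X (tens Y Z));
  assoc_inv : forall X Y Z, mhom (tens X (tens Y Z)) (tens (tens X Y) Z);
  assoc_iso1 : forall X Y Z, cmp (assoc X Y Z) (assoc_inv X Y Z) = idm _;
  assoc_iso2 : forall X Y Z, cmp (assoc_inv X Y Z) (assoc X Y Z) = idm _;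
  assoc_nat : forall X X' X'' Y Y' Y'' (f : mhom X Y) (g : mhom X' Y')
      (h : mhom X'' Y''),
      cmp (tensh (tensh f g) h) (assoc Y Y' Y'')
      = cmp (assoc X X' X'') (tensh f (tensh g h));
  lu : forall X, mhom (tens munit X) X;
  lu_inv : forall X, mhom X (tens munit X);
  lu_iso1 : forall X, cmp (lu X) (lu_inv X) = idm _;
  lu_iso2 : forall X, cmp (lu_inv X) (lu X) = idm _;
  lu_nat : forall X Y (f : mhom X Y),
      cmp (tensh (idm munit) f) (lu Y) = cmp (lu X) f;
  ru : forall X, mhom (tens X munit) X;
  ru_inv : forall X, mhom X (tens X munit);
  ru_iso1 : forall X, cmp (ru X) (ru_inv X) = idm _;
  ru_iso2 : forall X, cmp (ru_inv X) (ru X) = idm _;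
  ru_nat : forall X Y (f : mhom X Y),
      cmp (tensh f (idm munit)) (ru Y) = cmp (ru X) f;
  pentagon : forall W X Y Z,
      cmp (assoc (tens W X) Y Z) (assoc W X (tens Y Z))
      = cmp (cmp (tensh (assoc W X Y) (idm Z)) (assoc W (tens X Y) Z))
            (tensh (idm W) (assoc X Y Z));
  triangle : forall X Y,
      cmp (assoc X munit Y) (tensh (idm X) (lu Y)) = tensh (ru X) (idm Y)
}.

Arguments mhom {C} : rename.
Arguments idm {C} X : rename.
Arguments cmp {C X Y Z} : rename.
Arguments tens {C} : rename.
Arguments tensh {C X X' Y Y'} : rename.
Arguments munit {C} : rename.
Arguments assoc {C} : rename.
Arguments assoc_inv {C} : rename.
Arguments lu {C} : rename.
Arguments lu_inv {C} : rename.
Arguments ru {C} : rename.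
Arguments ru_inv {C} : rename.

(* (A, B, ev : A ⊗ B -> 1, coev : 1 -> B ⊗ A) is a duality: A is a left dual
   of B (equivalently B is a right dual of A), i.e. the two zigzag
   identities hold. *)
Definition is_duality (C : MonCat) (A B : C)
    (ev : mhom (tens A B) munit) (coev : mhom munit (tens B A)) : Prop :=
  cmp (lu_inv B) (cmp (tensh coev (idm B))
      (cmp (assoc B A B) (cmp (tensh (idm B) ev) (ru B)))) = idm B
  /\
  cmp (ru_inv A) (cmp (tensh (idm A) coev)
      (cmp (assoc_inv A B A) (cmp (tensh ev (idm A)) (lu A)))) = idm A.

Definition rigid (C : MonCat) : Prop :=
  forall X : C,
    (exists (Xd : C) (ev : mhom (tens Xd X) munit) (coev : mhom munit (tens X Xd)),
        is_duality ev coev)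
    /\
    (exists (Xd : C) (ev : mhom (tens X Xd) munit) (coev : mhom munit (tens Xd X)),
        is_duality ev coev).

(* The monoidal structure of vect (skeletal model: an object is a dimension
   n, i.e. K^n, a morphism m -> n is an m x n matrix acting on row vectors,
   the tensor product is the Kronecker product 'tensmx', where the basis
   vector e_i ⊗ e_j of K^m ⊗ K^n is e_(i*n+j)).  The associator and unitors
   of vect are then the identity permutations on indices. *)
Definition vassoc (K : fieldType) (a b c : nat) : 'M[K]_(a * b * c, a * (b * c)) :=
  \matrix_(i, j) ((i : nat) == j)%:R.
Definition vlu (K : fieldType) (n : nat) : 'M[K]_(1 * n, n) :=
  \matrix_(i, j) ((i : nat) == j)%:R.
Definition vru (K : fieldType) (n : nat) : 'M[K]_(n * 1, n) :=
  \matrix_(i, j) ((i : nat) == j)%:R.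

Record MonFun (C : MonCat) (K : fieldType) := {
  fob :> C -> nat;
  fhom : forall X Y : C, mhom X Y -> 'M[K]_(fob X, fob Y);
  fhom_id : forall X : C, fhom (idm X) = 1%:M;
  fhom_cmp : forall (X Y Z : C) (f : mhom X Y) (g : mhom Y Z),
      fhom (cmp f g) = fhom f *m fhom g;
  fJ : forall X Y : C, 'M[K]_(fob X * fob Y, fob (tens X Y));
  fJ_inv : forall X Y : C, 'M[K]_(fob (tens X Y), fob X * fob Y);
  fJ_iso1 : forall X Y : C, fJ X Y *m fJ_inv X Y = 1%:M;
  fJ_iso2 : forall X Y : C, fJ_inv X Y *m fJ X Y = 1%:M;
  fJ_nat : forall (X X' Y Y' : C) (f : mhom X Y) (g : mhom X' Y'),
      tensmx (fhom f) (fhom g) *m fJ Y Y' = fJ X X' *m fhom (tensh f g);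
  (* phi0 : k -> F 1, invertible; phi0 is the image of 1 in F(1) *)
  fphi0 : 'M[K]_(1, fob munit);
  fphi0_inv : 'M[K]_(fob munit, 1);
  fphi0_iso1 : fphi0 *m fphi0_inv = 1%:M;
  fphi0_iso2 : fphi0_inv *m fphi0 = 1%:M;
  f_assoc : forall X Y Z : C,
      tensmx (fJ X Y) (1%:M : 'M_(fob Z)) *m fJ (tens X Y) Z *m fhom (assoc X Y Z)
      = vassoc K (fob X) (fob Y) (fob Z)
          *m tensmx (1%:M : 'M_(fob X)) (fJ Y Z) *m fJ X (tens Y Z);
  f_lu : forall X : C,
      tensmx fphi0 (1%:M : 'M_(fob X)) *m fJ munit X *m fhom (lu X) = vlu K (fob X);
  f_ru : forall X : C,
      tensmx (1%:M : 'M_(fob X)) fphi0 *m fJ X munit *m fhom (ru X) = vru K (fob X)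
}.

Arguments fhom {C K} F {X Y} : rename.
Arguments fJ {C K} F : rename.
Arguments fphi0 {C K} F : rename.
Arguments fphi0_inv {C K} F : rename.

Definition fun_nondegenerate (C : MonCat) (K : fieldType) (F : MonFun C K) : Prop :=
  forall (X : C) (v : 'rV[K]_(F X)),
    exists s : seq (K * mhom munit X),
      v = \sum_(p <- s) p.1 *: (fphi0 F *m fhom F p.2).

(* The scalar F(phi) in End(F 1) = End(k) = k, for phi : 1 -> 1
   (read through the identification phi0 : k ~ F 1). *)
Definition unit_scalar (C : MonCat) (K : fieldType) (F : MonFun C K)
    (phi : mhom (@munit C) munit) : 'M[K]_1 :=
  fphi0 F *m fhom F phi *m fphi0_inv F.

Definition monoidal_nat_iso (C : MonCat) (K : fieldType) (F G : MonFun C K)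
    (eta : forall X : C, 'M[K]_(F X, G X)) : Prop :=
  (forall (X Y : C) (f : mhom X Y), fhom F f *m eta Y = eta X *m fhom G f)
  /\ (forall X : C, exists eta' : 'M[K]_(G X, F X),
          eta X *m eta' = 1%:M /\ eta' *m eta X = 1%:M)
  /\ (forall X Y : C, fJ F X Y *m eta (tens X Y) = tensmx (eta X) (eta Y) *m fJ G X Y)
  /\ fphi0 F *m eta munit = fphi0 G.

(* Main.v *)
Require Import Defs.
From HB Require Import structures.
From mathcomp Require Import all_boot all_order all_algebra.
From mathcomp Require Import mxtens.
From Stdlib Require Import ClassicalEpsilon.
Set Implicit Arguments. Unset Strict Implicit.
Import GRing.Theory.
Local Open Scope ring_scope.

Definition Imx (K : fieldType) (p q : nat) : 'M[K]_(p, q) :=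
  \matrix_(i, j) ((i : nat) == j)%:R.

Lemma ImxMl (K : fieldType) m p q (e : p = q) (M : 'M[K]_(m, p)) i k :
  (M *m Imx K p q) i k = M i (cast_ord (esym e) k).
Proof.
rewrite mxE (bigD1 (cast_ord (esym e) k)) //= mxE /= eqxx mulr1 big1 ?addr0 //.
move=> j hj; rewrite mxE.
case: eqP => [hjk|]; last by rewrite mulr0.
by move: hj; rewrite -val_eqE /= hjk eqxx.
Qed.

Lemma ImxMr (K : fieldType) m p q (e : p = q) (M : 'M[K]_(q, m)) i k :
  (Imx K p q *m M) i k = M (cast_ord e i) k.
Proof.
rewrite mxE (bigD1 (cast_ord e i)) //= mxE /= eqxx mul1r big1 ?addr0 //.
move=> j hj; rewrite mxE.
case: eqP => [hjk|]; last by rewrite mul0r.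
by move: hj; rewrite -val_eqE /= hjk eqxx.
Qed.

Lemma Imx_inv (K : fieldType) p q (e : p = q) : Imx K q p *m Imx K p q = 1%:M.
Proof.
apply/matrixP=> i j; rewrite (ImxMl e) !mxE /=.
by congr (_%:R).
Qed.

Lemma sum_tens (K : fieldType) p q (Fn : 'I_(p * q) -> K) :
  \sum_(l < p * q) Fn l = \sum_(x < p) \sum_(z < q) Fn (mxtens_index (x, z)).
Proof.
rewrite pair_bigA /= (reindex (fun ij : 'I_p * 'I_q => mxtens_index ij)) //=.
  by apply: eq_bigr => -[a b].
by exists (@mxtens_unindex p q) => y _; [apply: mxtens_indexK | apply: mxtens_unindexK].
Qed.

Lemma sum_deltar (K : fieldType) q (f : 'I_q -> K) j :
  \sum_(z < q) f z * (1%:M : 'M[K]_q) z j = f j.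
Proof.
rewrite (bigD1 j) //= mxE eqxx mulr1 big1 ?addr0 // => z hz.
by rewrite mxE (negbTE hz) mulr0.
Qed.

Lemma sum_deltal (K : fieldType) q (f : 'I_q -> K) j :
  \sum_(z < q) (1%:M : 'M[K]_q) j z * f z = f j.
Proof.
rewrite (bigD1 j) //= mxE eqxx mul1r big1 ?addr0 // => z hz.
by rewrite mxE eq_sym (negbTE hz) mul0r.
Qed.

Lemma tensmx11 (K : fieldType) a b :
  tensmx (1%:M : 'M[K]_a) (1%:M : 'M[K]_b) = 1%:M.
Proof.
apply/matrixP=> i j.
case: (mxtens_indexP i) => i1 i2; case: (mxtens_indexP j) => j1 j2.
rewrite tensmxE !mxE (inj_eq (can_inj (@mxtens_indexK a b))) xpair_eqE.
by case: (i1 == j1); case: (i2 == j2); rewrite ?mulr1 ?mulr0.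
Qed.

Lemma tensmxDr (K : fieldType) m n p q (A : 'M[K]_(m, n)) (B1 B2 : 'M[K]_(p, q)) :
  tensmx A (B1 + B2) = tensmx A B1 + tensmx A B2.
Proof. by apply/matrixP=> i j; rewrite !mxE mulrDr. Qed.

Lemma tensmxZr (K : fieldType) m n p q (A : 'M[K]_(m, n)) (c : K) (B : 'M[K]_(p, q)) :
  tensmx A (c *: B) = c *: tensmx A B.
Proof. by apply/matrixP=> i j; rewrite !mxE mulrCA. Qed.

Lemma row_tens (K : fieldType) m n p q (A : 'M[K]_(m, n)) (B : 'M[K]_(p, q)) i k :
  row (mxtens_index (i, k)) (tensmx A B) = tensmx (row i A) (row k B).
Proof.
apply/matrixP=> r j; case: (mxtens_indexP j) => j1 j2.
have -> : r = mxtens_index (ord0, ord0) :> 'I_(1 * 1).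
  by apply/val_inj; case: r => -[].
by rewrite mxE tensmxE [RHS]mxE !mxtens_indexK /= !mxE.
Qed.
Definition mkA (K : fieldType) (H : Type) n (r : H -> 'rV[K]_n) N (f : 'I_N -> H)
  : 'M[K]_(N, n) := \matrix_(k, j) r (f k) 0 j.

Lemma row_mkA (K : fieldType) (H : Type) n (r : H -> 'rV[K]_n) N (f : 'I_N -> H) k :
  row k (mkA r f) = r (f k).
Proof. by apply/rowP => j; rewrite !mxE. Qed.

Definition spanned (K : fieldType) (H : Type) n (r : H -> 'rV[K]_n) p (A : 'M[K]_(p, n))
  := exists N (f : 'I_N -> H), (A <= mkA r f)%MS.

Lemma combine (K : fieldType) (H : Type) n (r : H -> 'rV[K]_n) N1 (f1 : 'I_N1 -> H)
  N2 (f2 : 'I_N2 -> H) :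
  exists N (f : 'I_N -> H), (mkA r f1 <= mkA r f)%MS /\ (mkA r f2 <= mkA r f)%MS.
Proof.
exists (N1 + N2)%N, (fun k => match split k with inl a => f1 a | inr b => f2 b end).
split; apply/row_subP => a; rewrite row_mkA.
  have := row_sub (unsplit (inl a)) (mkA r (fun k => match split k with inl a => f1 a | inr b => f2 b end)).
  by rewrite row_mkA unsplitK.
have := row_sub (unsplit (inr a)) (mkA r (fun k => match split k with inl a => f1 a | inr b => f2 b end)).
by rewrite row_mkA unsplitK.
Qed.

Lemma spanned_add (K : fieldType) (H : Type) n (r : H -> 'rV[K]_n) p (A B : 'M[K]_(p, n)) :
  spanned r A -> spanned r B -> spanned r (A + B).
Proof.
move=> [N1 [f1 h1]] [N2 [f2 h2]].
have [N [f [s1 s2]]] := combine r f1 f2.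
exists N, f; rewrite addmx_sub //; [exact: submx_trans h1 s1 | exact: submx_trans h2 s2].
Qed.

Lemma spanned_mull (K : fieldType) (H : Type) n (r : H -> 'rV[K]_n) p q (A : 'M[K]_(p, n))
  (B : 'M[K]_(q, p)) : spanned r A -> spanned r (B *m A).
Proof. by move=> [N [f h]]; exists N, f; exact: submx_trans (submxMl B A) h. Qed.

Lemma spanned_scale (K : fieldType) (H : Type) n (r : H -> 'rV[K]_n) p (A : 'M[K]_(p, n)) c :
  spanned r A -> spanned r (c *: A).
Proof. by move=> [N [f h]]; exists N, f; exact: scalemx_sub. Qed.

Definition f0 (H : Type) : 'I_0 -> H.
Proof. by case. Defined.

Lemma spanned0 (K : fieldType) (H : Type) n (r : H -> 'rV[K]_n) p :
  spanned r (0 : 'M[K]_(p, n)).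
Proof. by exists 0%N, (@f0 H); rewrite sub0mx. Qed.

Lemma spanned_single (K : fieldType) (H : Type) n (r : H -> 'rV[K]_n) h :
  spanned r (r h).
Proof.
exists 1%N, (fun _ => h).
by have := row_sub ord0 (mkA r (fun _ : 'I_1 => h)); rewrite row_mkA.
Qed.

Lemma spanned_sum (K : fieldType) (H : Type) n (r : H -> 'rV[K]_n) p (I : Type)
  (s : seq I) (A : I -> 'M[K]_(p, n)) :
  (forall i, spanned r (A i)) -> spanned r (\sum_(i <- s) A i).
Proof.
move=> h; elim: s => [|i s ih]; first by rewrite big_nil; exact: spanned0.
by rewrite big_cons; apply: spanned_add.
Qed.

Lemma spanned_sumo (K : fieldType) (H : Type) n (r : H -> 'rV[K]_n) p q
  (A : 'I_q -> 'M[K]_(p, n)) :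
  (forall i, spanned r (A i)) -> spanned r (\sum_(i < q) A i).
Proof.
by move=> h; rewrite -big_enum /=; apply: spanned_sum.
Qed.

Lemma spanned_rows (K : fieldType) (H : Type) n (r : H -> 'rV[K]_n) p (A : 'M[K]_(p, n)) :
  (forall i, spanned r (row i A)) -> spanned r A.
Proof.
move=> h.
have -> : A = \sum_(i < p) (delta_mx i 0 : 'M[K]_(p, 1)) *m row i A.
  apply/matrixP=> k j; rewrite summxE (bigD1 k) //= big1 ?addr0.
    by rewrite !mxE big_ord1 !mxE !eqxx mul1r.
  by move=> i hi; rewrite !mxE big_ord1 !mxE eq_sym (negbTE hi) mul0r.
by apply: spanned_sumo => i; apply: spanned_mull.
Qed.

Lemma fiso (K : fieldType) (C : MonCat) (F : MonFun C K) (X Y : C)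
  (f : mhom X Y) (g : mhom Y X) : cmp f g = idm X -> fhom F f *m fhom F g = 1%:M.
Proof. by move=> h; rewrite -fhom_cmp h fhom_id. Qed.

Lemma vluE (K : fieldType) n : vlu K n = Imx K (1 * n) n. Proof. by []. Qed.
Lemma vruE (K : fieldType) n : vru K n = Imx K (n * 1) n. Proof. by []. Qed.
Lemma vassocE (K : fieldType) a b c : vassoc K a b c = Imx K (a * b * c) (a * (b * c)).
Proof. by []. Qed.

Lemma vlu_tens (K : fieldType) n (u : 'rV[K]_n) :
  tensmx (1%:M : 'M[K]_1) u *m vlu K n = u.
Proof.
apply/rowP=> k; rewrite vluE (ImxMl (mul1n n)).
have -> : cast_ord (esym (mul1n n)) k = mxtens_index (ord0, k) :> 'I_(1 * n).
  by apply: val_inj => /=; rewrite mul0n add0n.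
rewrite mxE mxtens_indexK /=.
by rewrite !(ord1 (Ordinal _)) mxE mul1r.
Qed.

Lemma unitU (K : fieldType) (C : MonCat) (F : MonFun C K) :
  tensmx (fphi0 F) (fphi0 F) *m fJ F munit munit = fphi0 F *m fhom F (lu_inv (@munit C)).
Proof.
have h := f_lu F munit.
have : tensmx (1%:M : 'M[K]_1) (fphi0 F) *m
   (tensmx (fphi0 F) 1%:M *m fJ F munit munit *m fhom F (lu munit)) *m fhom F (lu_inv munit)
  = tensmx (1%:M : 'M[K]_1) (fphi0 F) *m vlu K (F munit) *m fhom F (lu_inv munit).
  by rewrite h.
rewrite vlu_tens -!mulmxA (fiso F (lu_iso1 _)) mulmx1 !mulmxA tensmx_mul mul1mx mulmx1.
by [].
Qed.

Lemma ru_invE (K : fieldType) (C : MonCat) (F : MonFun C K) (X : C) :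
  fhom F (ru_inv X) = Imx K (F X) (F X * 1) *m tensmx 1%:M (fphi0 F) *m fJ F X munit.
Proof.
have h' : Imx K (F X) (F X * 1) *m (tensmx 1%:M (fphi0 F) *m fJ F X munit *m fhom F (ru X))
   = 1%:M by rewrite f_ru vruE (Imx_inv _ (muln1 _)).
rewrite -[RHS]mulmx1 -(fiso F (ru_iso1 X)) !mulmxA.
by rewrite !mulmxA in h'; rewrite h' mul1mx.
Qed.

Lemma J_lu (K : fieldType) (C : MonCat) (F : MonFun C K) (X : C) :
  fJ F munit X *m fhom F (lu X) = tensmx (fphi0_inv F) 1%:M *m vlu K (F X).
Proof.
by rewrite -(f_lu F X) !mulmxA tensmx_mul fphi0_iso2 mulmx1 tensmx11 mul1mx.
Qed.

Lemma h1L (K : fieldType) (C : MonCat) (F : MonFun C K) (X Xd : C)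
  (coev : mhom munit (tens Xd X)) p (M : 'M[K]_(p, _)) :
  M *m tensmx 1%:M (fphi0 F) *m fJ F X munit *m fhom F (tensh (idm X) coev)
  = M *m tensmx 1%:M (fphi0 F *m fhom F coev *m fJ_inv F Xd X)
      *m tensmx 1%:M (fJ F Xd X) *m fJ F X (tens Xd X).
Proof.
rewrite -!mulmxA; congr (_ *m _); rewrite !mulmxA.
rewrite -mulmxA -fJ_nat fhom_id mulmxA tensmx_mul mul1mx.
by rewrite tensmx_mul mulmx1 -(mulmxA _ (fJ_inv F Xd X)) fJ_iso2 mulmx1.
Qed.

Lemma h2L (K : fieldType) (C : MonCat) (F : MonFun C K) (X Xd : C) p (M : 'M[K]_(p, _)) :
  M *m tensmx 1%:M (fJ F Xd X) *m fJ F X (tens Xd X) *m fhom F (assoc_inv X Xd X)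
  = M *m Imx K (F X * (F Xd * F X)) (F X * F Xd * F X)
      *m tensmx (fJ F X Xd) 1%:M *m fJ F (tens X Xd) X.
Proof.
rewrite -!mulmxA; congr (_ *m _); rewrite !mulmxA.
have h := f_assoc F X Xd X; rewrite vassocE in h.
have h' : Imx K (F X * (F Xd * F X)) (F X * F Xd * F X) *m
   (Imx K (F X * F Xd * F X) (F X * (F Xd * F X)) *m tensmx 1%:M (fJ F Xd X) *m fJ F X (tens Xd X))
  = Imx K (F X * (F Xd * F X)) (F X * F Xd * F X) *m
   (tensmx (fJ F X Xd) 1%:M *m fJ F (tens X Xd) X *m fhom F (assoc X Xd X)) by rewrite h.
rewrite !mulmxA (Imx_inv _ (esym (mulnA _ _ _))) mul1mx in h'.
rewrite h'.
by rewrite -mulmxA (fiso F (assoc_iso1 X Xd X)) mulmx1.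
Qed.

Lemma h3L (K : fieldType) (C : MonCat) (F : MonFun C K) (X Xd : C)
  (ev : mhom (tens X Xd) munit) p (M : 'M[K]_(p, _)) :
  M *m tensmx (fJ F X Xd) 1%:M *m fJ F (tens X Xd) X *m fhom F (tensh ev (idm X))
  = M *m tensmx (fJ F X Xd *m fhom F ev) 1%:M *m fJ F munit X.
Proof.
rewrite -!mulmxA; congr (_ *m _); rewrite !mulmxA.
by rewrite -mulmxA -fJ_nat fhom_id mulmxA tensmx_mul mulmx1.
Qed.

Lemma star (K : fieldType) (C : MonCat) (F : MonFun C K) (X Xd : C)
  (ev : mhom (tens X Xd) munit) (coev : mhom munit (tens Xd X)) :
  cmp (ru_inv X) (cmp (tensh (idm X) coev)
      (cmp (assoc_inv X Xd X) (cmp (tensh ev (idm X)) (lu X)))) = idm X ->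
  1%:M = Imx K (F X) (F X * 1)
     *m tensmx 1%:M (fphi0 F *m fhom F coev *m fJ_inv F Xd X)
     *m Imx K (F X * (F Xd * F X)) (F X * F Xd * F X)
     *m tensmx (fJ F X Xd *m fhom F ev *m fphi0_inv F) 1%:M
     *m vlu K (F X).
Proof.
move=> zig.
have := congr1 (@fhom _ _ F _ _) zig; rewrite fhom_id !fhom_cmp => h; rewrite -{1}h.
rewrite ru_invE !mulmxA h1L h2L h3L -mulmxA J_lu !mulmxA.
by rewrite -(mulmxA _ (tensmx (fJ F X Xd *m fhom F ev) 1%:M)) tensmx_mul mulmx1.
Qed.


Lemma claim1 (K : fieldType) n d (c : 'rV[K]_(d * n)) (E : 'M[K]_(n * d, 1)) :
  Imx K n (n * 1) *m tensmx 1%:M c *m Imx K (n * (d * n)) (n * d * n)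
    *m tensmx E 1%:M *m vlu K n
  = \sum_(a < d) (\matrix_(i, t) E (mxtens_index (i, a)) t : 'M[K]_(n, 1))
        *m (\row_j c 0 (mxtens_index (a, j))).
Proof.
apply/matrixP=> i j.
rewrite vluE (ImxMl (mul1n n)) mxE summxE sum_tens.
rewrite [LHS]sum_tens.
have e1 : forall (x : 'I_n) (a : 'I_d) (z : 'I_n),
  (Imx K n (n * 1) *m (tensmx 1%:M c) *m Imx K (n * (d * n)) (n * d * n))
     i (mxtens_index (mxtens_index (x, a), z)) = (1%:M : 'M[K]_n) i x * c 0 (mxtens_index (a, z)).
  move=> x a z; rewrite (ImxMl (mulnA n d n)) (ImxMr (esym (muln1 n))).
  have -> : cast_ord (esym (mulnA n d n)) (mxtens_index (mxtens_index (x, a), z))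
     = mxtens_index (x, mxtens_index (a, z)).
    apply: val_inj => /=; rewrite mulnDl -mulnA addnA //.
  have -> : cast_ord (esym (muln1 n)) i = mxtens_index (i, ord0).
    by apply: val_inj => /=; rewrite muln1 addn0.
  by rewrite tensmxE.
have e2 : forall (x : 'I_n) (a : 'I_d) (z : 'I_n),
  (tensmx E 1%:M) (mxtens_index (mxtens_index (x, a), z)) (cast_ord (esym (mul1n n)) j)
   = E (mxtens_index (x, a)) 0 * (1%:M : 'M[K]_n) z j.
  move=> x a z.
  have -> : cast_ord (esym (mul1n n)) j = mxtens_index (ord0, j).
    by apply: val_inj => /=; rewrite mul0n add0n.
  by rewrite tensmxE.
under eq_bigr => x _ do under eq_bigr => a _ do under eq_bigr => z _ do rewrite e1 e2.
rewrite (bigD1 i) //= [X in _ + X = _]big1 ?addr0; last first.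
  move=> x hx; apply: big1 => a _; apply: big1 => z _.
  by rewrite mxE eq_sym (negbTE hx) !mul0r.
apply: eq_bigr => a _.
rewrite [RHS]mxE big_ord1 !mxE.
rewrite (bigD1 j) //= [X in _ + X = _]big1 ?addr0; last first.
  by move=> z hz; rewrite [1%:M z j]mxE (negbTE hz) !mulr0.
by rewrite !mxE !eqxx mul1r mulr1 mulrC.
Qed.

Lemma claim2 (K : fieldType) n d (E : 'M[K]_(n * d, 1)) (a : 'I_d) :
  (\matrix_(i, t) E (mxtens_index (i, a)) t : 'M[K]_(n, 1))
  = Imx K n (n * 1) *m tensmx (1%:M : 'M[K]_n) (delta_mx 0 a : 'rV[K]_d) *m E.
Proof.
apply/matrixP=> i t; rewrite [RHS]mxE sum_tens.
have e1 : forall (x : 'I_n) (b : 'I_d),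
  (Imx K n (n * 1) *m tensmx (1%:M : 'M[K]_n) (delta_mx 0 a : 'rV[K]_d)) i (mxtens_index (x, b))
  = (1%:M : 'M[K]_n) i x * (delta_mx 0 a : 'rV[K]_d) 0 b.
  move=> x b; rewrite (ImxMr (esym (muln1 n))).
  have -> : cast_ord (esym (muln1 n)) i = mxtens_index (i, ord0).
    by apply: val_inj => /=; rewrite muln1 addn0.
  by rewrite tensmxE.
under eq_bigr => x _ do under eq_bigr => b _ do rewrite e1.
rewrite (bigD1 i) //= [X in _ = _ + X]big1 ?addr0; last first.
  move=> x hx; apply: big1 => b _.
  by rewrite mxE eq_sym (negbTE hx) !mul0r.
rewrite (bigD1 a) //= [X in _ = _ + X]big1 ?addr0; last first.
  by move=> b hb; rewrite [delta_mx _ _ _ _]mxE (negbTE hb) andbF mulr0 mul0r.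
by rewrite !mxE !eqxx mul1r mul1r.
Qed.

Definition cF (K : fieldType) (C : MonCat) (F : MonFun C K) (X : C) (g : mhom X munit)
  : 'rV[K]_(F X) := (fhom F g *m fphi0_inv F)^T.

Definition rF (K : fieldType) (C : MonCat) (F : MonFun C K) (X : C) (f : mhom munit X)
  : 'rV[K]_(F X) := fphi0 F *m fhom F f.

Lemma Ew_single (K : fieldType) (C : MonCat) (F : MonFun C K) (X Xd : C)
  (ev : mhom (tens X Xd) munit) (h : mhom munit Xd) :
  Imx K (F X) (F X * 1) *m tensmx 1%:M (rF F h) *m fJ F X Xd *m fhom F ev
  = fhom F (cmp (ru_inv X) (cmp (tensh (idm X) h) ev)).
Proof.
rewrite !fhom_cmp ru_invE !mulmxA -(mulmxA _ (fJ F X munit)) -fJ_nat fhom_id.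
by rewrite !mulmxA -(mulmxA _ (tensmx _ (fphi0 F))) tensmx_mul mul1mx.
Qed.

Lemma Ew_spanned (K : fieldType) (C : MonCat) (F : MonFun C K) (X Xd : C)
  (ev : mhom (tens X Xd) munit) (nd : fun_nondegenerate F) (w : 'rV[K]_(F Xd)) :
  spanned (@cF K C F X)
    (Imx K (F X) (F X * 1) *m tensmx 1%:M w *m fJ F X Xd *m fhom F ev *m fphi0_inv F)^T.
Proof.
have [s ->] := nd Xd w.
elim: s => [|p s ih].
  by rewrite big_nil tensmx0 mulmx0 !mul0mx trmx0; apply: spanned0.
rewrite big_cons tensmxDr mulmxDr !mulmxDl linearD /=.
apply: spanned_add => //.
rewrite tensmxZr -scalemxAr -!scalemxAl linearZ /=.
apply: spanned_scale.
have := Ew_single F ev p.2; rewrite /rF => ->.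
exact: spanned_single.
Qed.

Lemma sepF (K : fieldType) (C : MonCat) (F : MonFun C K) (X : C)
  (rig : rigid C) (nd : fun_nondegenerate F) :
  spanned (@cF K C F X) (1%:M : 'M[K]_(F X)).
Proof.
have [_ [Xd [ev [coev [_ zig]]]]] := rig X.
have h := star F zig; rewrite claim1 in h.
rewrite -trmx1 h raddf_sum /=.
apply: spanned_sumo => a; rewrite trmx_mul; apply: spanned_mull.
rewrite claim2 !mulmxA.
exact: Ew_spanned.
Qed.

Lemma rows_span (K : fieldType) (C : MonCat) (F : MonFun C K) (X : C)
  (nd : fun_nondegenerate F) :
  spanned (@rF K C F X) (1%:M : 'M[K]_(F X)).
Proof.
apply: spanned_rows => i; have [s ->] := nd X (row i 1%:M).
apply: spanned_sum => p; apply: spanned_scale; exact: spanned_single.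
Qed.

Lemma pair_row (K : fieldType) (C : MonCat) (F : MonFun C K) (X : C) N
  (gs : 'I_N -> mhom X munit) (u : 'rV[K]_(F X)) :
  u *m (mkA (@cF K C F X) gs)^T = \row_l (u *m (fhom F (gs l) *m fphi0_inv F)) 0 0.
Proof.
by apply/rowP => l; rewrite !mxE; apply: eq_bigr => i _; rewrite !mxE.
Qed.

Lemma F_ext (K : fieldType) (C : MonCat) (F : MonFun C K) (X : C)
  (nd : fun_nondegenerate F) p (M1 M2 : 'M[K]_(F X, p)) :
  (forall f, rF F f *m M1 = rF F f *m M2) -> M1 = M2.
Proof.
move=> h; have [N [fs /submxP [P hP]]] := rows_span X nd.
rewrite -(mul1mx M1) -(mul1mx M2) hP -!mulmxA; congr (_ *m _).
by apply/row_matrixP => k; rewrite !row_mul row_mkA.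
Qed.


Lemma exists_eta (K : fieldType) (C : MonCat) (F G : MonFun C K) (X : C)
  (rig : rigid C) (nd : fun_nondegenerate F) (hdim : (G X <= F X)%N)
  (hsc : forall phi, unit_scalar F phi = unit_scalar G phi) :
  exists e : 'M[K]_(F X, G X), (forall f : mhom munit X, rF F f *m e = rF G f)
     /\ (exists e' : 'M[K]_(G X, F X), e *m e' = 1%:M /\ e' *m e = 1%:M).
Proof.
have [N [fs /submxP [P hP]]] := rows_span X nd.
have [L [gs /submxP [R0 hR0]]] := sepF X rig nd.
set AF := mkA (@rF K C F X) fs in hP.
set AG := mkA (@rF K C G X) fs.
set BF := (mkA (@cF K C F X) gs)^T.
set BG := (mkA (@cF K C G X) gs)^T.
have hBR : BF *m R0^T = 1%:M by rewrite /BF -trmx_mul -hR0 trmx1.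
have pairing : forall f, rF F f *m BF = rF G f *m BG.
  move=> f; rewrite /BF /BG !pair_row; apply/rowP => l; rewrite mxE [RHS]mxE.
  have := hsc (cmp f (gs l)); rewrite /unit_scalar !fhom_cmp /rF !mulmxA => ->.
  by [].
have hAB : AF *m BF = AG *m BG.
  by apply/row_matrixP => k; rewrite !row_mul !row_mkA pairing.
have hrk : (F X <= \rank (AG *m BG))%N.
  rewrite -hAB -{1}(mxrank1 K (F X)) -{1}hBR -{1}(mul1mx BF) hP -!mulmxA.
  apply: leq_trans (mxrankM_maxr _ _) _; rewrite mulmxA.
  exact: mxrankM_maxl.
have rfull : row_full AG.
  rewrite /row_full eqn_leq rank_leq_col /=.
  by apply: leq_trans hdim (leq_trans hrk (mxrankM_maxl _ _)).
have rfree : row_free BG.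
  rewrite /row_free eqn_leq rank_leq_row /=.
  by apply: leq_trans hdim (leq_trans hrk (mxrankM_maxr _ _)).
have [Q hQ] := row_fullP rfull.
have [R2 hR2] := row_freeP rfree.
have key : forall f, rF F f *m (P *m AG) = rF G f.
  move=> f.
  have : rF F f *m (P *m AG) *m BG = rF G f *m BG.
    by rewrite -mulmxA -mulmxA -hAB !mulmxA -(mulmxA (rF F f) P AF) -hP mulmx1 pairing.
  by move/(congr1 (mulmx^~ R2)); rewrite -!mulmxA hR2 !mulmx1.
exists (P *m AG); split => //.
have hAe : AF *m (P *m AG) = AG.
  by apply/row_matrixP => k; rewrite !row_mul !row_mkA key.
have h1 : P *m AG *m (BG *m R0^T) = 1%:M.
  by rewrite -mulmxA (mulmxA AG) -hAB -mulmxA hBR mulmx1 -hP.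
have h2 : Q *m AF *m (P *m AG) = 1%:M by rewrite -mulmxA hAe hQ.
exists (BG *m R0^T); split => //.
have : Q *m AF = BG *m R0^T.
  by rewrite -[LHS]mulmx1 -h1 mulmxA h2 mul1mx.
by move=> <-.
Qed.


Lemma tens_ext (K : fieldType) (C : MonCat) (F : MonFun C K) (X Y : C)
  (nd : fun_nondegenerate F) p (M1 M2 : 'M[K]_(F X * F Y, p)) :
  (forall f f', tensmx (rF F f) (rF F f') *m M1 = tensmx (rF F f) (rF F f') *m M2) -> M1 = M2.
Proof.
move=> h; have [N [fs /submxP [P hP]]] := rows_span X nd.
have [N' [fs' /submxP [P' hP']]] := rows_span Y nd.
rewrite -(mul1mx M1) -(mul1mx M2) -tensmx11 hP hP' -tensmx_mul -!mulmxA; congr (_ *m _).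
apply/row_matrixP => k; case: (mxtens_indexP k) => k1 k2.
by rewrite !row_mul row_tens !row_mkA.
Qed.

Lemma rF_cmp (K : fieldType) (C : MonCat) (F : MonFun C K) (X Y : C)
  (f : mhom munit X) (h : mhom X Y) : rF F (cmp f h) = rF F f *m fhom F h.
Proof. by rewrite /rF fhom_cmp mulmxA. Qed.

Lemma tens_rF (K : fieldType) (C : MonCat) (F : MonFun C K) (X Y : C)
  (f : mhom munit X) (f' : mhom munit Y) :
  tensmx (rF F f) (rF F f') *m fJ F X Y = rF F (cmp (lu_inv munit) (tensh f f')).
Proof.
rewrite /rF -tensmx_mul -mulmxA fJ_nat mulmxA unitU fhom_cmp.
by rewrite mulmxA.
Qed.

Unset Implicit Arguments. Set Strict Implicit.

Theorem lemma4p2 (K : fieldType) (C : MonCat) (F G : MonFun C K) :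
  rigid C ->
  fun_nondegenerate F ->
  (forall X : C, (G X <= F X)%N) ->
  (forall phi : mhom (@munit C) munit, unit_scalar F phi = unit_scalar G phi) ->
  exists eta : forall X : C, 'M[K]_(F X, G X),
    monoidal_nat_iso eta /\
    (forall eta' : forall X : C, 'M[K]_(F X, G X),
        monoidal_nat_iso eta' -> forall X : C, eta' X = eta X).
Proof.
move=> rig nd hdim hsc.
pose ex := fun X : C => constructive_indefinite_description _ (@exists_eta K C F G X rig nd (hdim X) hsc).
pose eta := fun X : C => proj1_sig (ex X).
have key : forall X (f : mhom munit X), rF F f *m eta X = rF G f.
  by move=> X f; have [h _] := proj2_sig (ex X).
exists eta; split.
  split.
    move=> X Y h; apply: (F_ext nd) => f.
    by rewrite mulmxA -rF_cmp key rF_cmp -key mulmxA.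
  split.
    by move=> X; have [_ h] := proj2_sig (ex X).
  split.
    move=> X Y; apply: (tens_ext nd) => f f'.
    rewrite [LHS]mulmxA tens_rF key mulmxA tensmx_mul !key.
    by rewrite tens_rF.
  by have := key munit (idm munit); rewrite /rF fhom_id mulmx1 => ->; rewrite fhom_id mulmx1.
move=> eta' [nat [_ [_ un]]] X; apply: (F_ext nd) => f.
rewrite key /rF -mulmxA nat mulmxA un.
by [].
Qed.
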